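(* Let $R$ be a unital associative ring and $$A=\begin{pmatrix}1&1&1\\1&a&b\\1&c&d\end{pmatrix}\in\widehat{\cal S},\qquad \Phi(A)=\begin{pmatrix}1&1&1\\1&a'&b'\\1&c'&d'\end{pmatrix}.$$ Then $$a'=(d-1)^{-1}(d-c)a^{-1}(db^{-1}-ca^{-1})^{-1}(db^{-1}-1),\quad b'=(c-1)^{-1}(d-c)b^{-1}(db^{-1}-ca^{-1})^{-1}(ca^{-1}-1),$$ $$c'=(b-1)^{-1}(b-a)a^{-1}(db^{-1}-ca^{-1})^{-1}(db^{-1}-1),\quad d'=(a-1)^{-1}(b-a)b^{-1}(db^{-1}-ca^{-1})^{-1}(ca^{-1}-1).$$
   Context: $R^*$: units of $R$. $M_3^*(R)$: invertible $3\times3$ matrices; $M_3^\star(R)$: matrices with all entries in $R^*$. $J_1(M)=M^{-1}$; $J_2(M)_{jk}=(M_{kj})^{-1}$; $J=J_2\circ J_1$. $\widehat M_3(R)$: matrices whose first row and column consist of $1$'s. For $A=\{a_{j,k}\}\in M_3^\star(R)$: $\Lambda^L(A)_{j,k}=a_{1,1}a_{j,1}^{-1}a_{j,k}a_{1,k}^{-1}$. $\Phi(A)=J_2(\Lambda^L(A^{-1}))$. ${\cal S}=\{M\in M_3(R):$ all square submatrices of $M$ are invertible and $J_2(M)$ is invertible$\}$, $\widehat{\cal S}={\cal S}\cap\widehat M_3(R)$. *)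

(* Defs.v *)
From HB Require Import structures.
From mathcomp Require Import all_boot all_order all_algebra.
From Stdlib Require Import ClassicalEpsilon.
Set Implicit Arguments. Unset Strict Implicit. Unset Printing Implicit Defensive.
Import GRing.Theory.
Local Open Scope ring_scope.

Section Defs.
Variable R : unitRingType.

Definition mx_invertible (k : nat) (M : 'M[R]_k) : Prop :=
  exists N : 'M[R]_k, M *m N = 1%:M /\ N *m M = 1%:M.

(* the inverse matrix A^{-1} (chosen; it is unique when A is invertible) *)
Definition minv (A : 'M[R]_3) : 'M[R]_3 :=
  epsilon (inhabits A) (fun B => A *m B = 1%:M /\ B *m A = 1%:M).

Definition all_units (M : 'M[R]_3) : Prop := forall i j, M i j \is a GRing.unit.

Definition J2 (M : 'M[R]_3) : 'M[R]_3 := \matrix_(j, k) (M k j)^-1.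

Definition LambdaL (A : 'M[R]_3) : 'M[R]_3 :=
  \matrix_(j, k) (A ord0 ord0 * (A j ord0)^-1 * A j k * (A ord0 k)^-1).

Definition Phi (A : 'M[R]_3) : 'M[R]_3 := J2 (LambdaL (minv A)).

Definition all_sq_submx_invertible (M : 'M[R]_3) : Prop :=
  forall (k : nat) (f g : 'I_k -> 'I_3), injective f -> injective g ->
    mx_invertible (mxsub f g M).

Definition inS (M : 'M[R]_3) : Prop :=
  all_sq_submx_invertible M /\ mx_invertible (J2 M).

Definition inMhat (M : 'M[R]_3) : Prop :=
  (forall j, M ord0 j = 1) /\ (forall j, M j ord0 = 1).

Definition inShat (M : 'M[R]_3) : Prop := inS M /\ inMhat M.

End Defs.

Definition i0 : 'I_3 := @Ordinal 3 0 isT.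
Definition i1 : 'I_3 := @Ordinal 3 1 isT.
Definition i2 : 'I_3 := @Ordinal 3 2 isT.

(* the matrix ((1,1,1),(1,a,b),(1,c,d)) *)
Definition hatmx (R : unitRingType) (a b c d : R) : 'M[R]_3 :=
  \matrix_(i, j) (if (i == i0) || (j == i0) then 1
                  else if i == i1 then (if j == i1 then a else b)
                  else (if j == i1 then c else d)).

(* Main.v *)
Require Import Defs.
From HB Require Import structures.
From mathcomp Require Import all_boot all_order all_algebra.
From Stdlib Require Import ClassicalEpsilon.
Import GRing.Theory.
Local Open Scope ring_scope.
Section S.
Variable R : unitRingType.
Implicit Types p q r s x y z : R.

Lemma qcol (p q1 q2 r1 r2 m11 m12 m21 m22 n11 n12 n21 n22 x y z : R) :
  n11* m11 + n12* m21 = 1 -> n11* m12 + n12* m22 = 0 -> n21* m11 + n22* m21 = 0 -> n21* m12 + n22* m22 = 1 ->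
  p* x + (q1* y + q2* z) = 1 -> r1* x + (m11* y + m12* z) = 0 -> r2* x + (m21* y + m22* z) = 0 ->
  (p - (q1*(n11* r1 + n12* r2) + q2*(n21* r1 + n22* r2))) * x = 1.
Proof.
move=> N1 N2 N3 N4 e1 e2 e3.
have E2: r1* x = -(m11* y + m12* z) by apply/eqP; rewrite -addr_eq0 e2.
have E3: r2* x = -(m21* y + m22* z) by apply/eqP; rewrite -addr_eq0 e3.
have Hy: n11*(r1* x) + n12*(r2* x) = -y.
  rewrite E2 E3 !mulrN -opprD; congr (- _).
  by rewrite !mulrDr !mulrA addrACA -!mulrDl N1 N2 mul1r mul0r addr0.
have Hz: n21*(r1* x) + n22*(r2* x) = -z.
  rewrite E2 E3 !mulrN -opprD; congr (- _).
  by rewrite !mulrDr !mulrA addrACA -!mulrDl N3 N4 mul1r mul0r add0r.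
rewrite mulrBl mulrDl -!mulrA !mulrDl -!mulrA Hy Hz !mulrN -opprD opprK.
by rewrite e1.
Qed.

Lemma qrow (p q1 q2 r1 r2 m11 m12 m21 m22 n11 n12 n21 n22 x y z : R) :
  m11* n11 + m12* n21 = 1 -> m11* n12 + m12* n22 = 0 -> m21* n11 + m22* n21 = 0 -> m21* n12 + m22* n22 = 1 ->
  x* q1 + (y* m11 + z* m21) = 0 -> x* q2 + (y* m12 + z* m22) = 0 -> x* p + (y* r1 + z* r2) = 1 ->
  x * (p - ((q1* n11 + q2* n21)* r1 + (q1* n12 + q2* n22)* r2)) = 1.
Proof.
move=> N1 N2 N3 N4 f1 f2 f3.
have F1: y* m11 + z* m21 = -(x* q1) by apply/eqP; rewrite -addr_eq0 addrC f1.
have F2: y* m12 + z* m22 = -(x* q2) by apply/eqP; rewrite -addr_eq0 addrC f2.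
have Hy: x*(q1* n11 + q2* n21) = -y.
  apply/eqP; rewrite -eqr_oppLR; apply/eqP.
  rewrite mulrDr !mulrA opprD -(mulNr (x*q1)) -(mulNr (x*q2)) -F1 -F2 !mulrDl -!mulrA addrACA -!mulrDr.
  by rewrite N1 N3 mulr1 mulr0 addr0.
have Hz: x*(q1* n12 + q2* n22) = -z.
  apply/eqP; rewrite -eqr_oppLR; apply/eqP.
  rewrite mulrDr !mulrA opprD -(mulNr (x*q1)) -(mulNr (x*q2)) -F1 -F2 !mulrDl -!mulrA addrACA -!mulrDr.
  by rewrite N2 N4 mulr0 mulr1 add0r.
rewrite mulrBr mulrDr !mulrA Hy Hz !mulNr -opprD opprK.
by rewrite f3.
Qed.

Lemma two_sided x L M : L * x = 1 -> x * M = 1 -> x \is a GRing.unit.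
Proof.
move=> Lx xM; apply/unitrP; exists L; split=> //.
have ->: L = M by rewrite -[L]mulr1 -xM mulrA Lx mul1r.
exact: xM.
Qed.

Lemma schur p q r s n11 n12 n21 n22 : p \is a GRing.unit ->
  n11* p + n12* r = 1 -> n11* q + n12* s = 0 -> n21* p + n22* r = 0 -> n21* q + n22* s = 1 ->
  p* n11 + q* n21 = 1 -> p* n12 + q* n22 = 0 -> r* n11 + s* n21 = 0 -> r* n12 + s* n22 = 1 ->
  (s - r* p^-1* q) \is a GRing.unit.
Proof.
move=> Up N1 N2 N3 N4 M1 M2 M3 M4.
apply: (@two_sided _ n22 n22).
  have E: n22* r = -(n21* p) by apply/eqP; rewrite -addr_eq0 addrC N3.
  by rewrite mulrBr !mulrA E !mulNr mulrK // opprK addrC.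
have E: q* n22 = -(p* n12) by apply/eqP; rewrite -addr_eq0 addrC M2.
by rewrite mulrBl -!mulrA E !mulrN mulKr // opprK addrC.
Qed.

Lemma solve2 x0 x1 x2 p q : (q - 1) \is a GRing.unit ->
  x0 + x1 + x2 = 0 -> x0 + p* x1 + q* x2 = 0 -> x0 = (q-1)^-1*(p-q)* x1.
Proof.
move=> Uq E1 E2.
have H: x2 = -(x0 + x1) by apply/eqP; rewrite -addr_eq0 addrC E1.
rewrite H mulrN mulrDr in E2.
move/eqP: E2; rewrite subr_eq0 => /eqP E.
rewrite -mulrA -[x0](mulKr Uq); congr (_ * _).
rewrite mulrBl mul1r mulrBl.
apply: (addIr (q* x1)); rewrite subrK addrAC -E addrAC subrr add0r.
done.
Qed.

Lemma col0 x0 y z p q s t : p \is a GRing.unit -> q \is a GRing.unit ->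
  (t* q^-1 - s* p^-1) \is a GRing.unit ->
  x0 + p* y + q* z = 0 -> x0 + s* y + t* z = 0 ->
  y = p^-1 * (t* q^-1 - s* p^-1)^-1 * (1 - t* q^-1) * x0.
Proof.
move=> Up Uq UW E1 E2.
have Hpy: p* y = -(x0 + q* z) by apply/eqP; rewrite -addr_eq0 addrC -addrA (addrC (q* z)) addrA E1.
have Hsy: s* y = -(x0 + t* z) by apply/eqP; rewrite -addr_eq0 addrC -addrA (addrC (t* z)) addrA E2.
rewrite -!mulrA -[y](mulKr Up) -[p* y](mulKr UW); congr (_ * (_ * _)).
rewrite mulrBl -(mulrA s) mulKr // Hsy -(mulrA t) Hpy mulrN mulrDr mulKr // mulrN mulrDr opprK opprD addrC addrACA subrr addr0 mulrBl mul1r mulrA.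
done.
Qed.
Lemma mul3 (A B : 'M[R]_3) i j : (A *m B) i j = A i i0 * B i0 j + A i i1 * B i1 j + A i i2 * B i2 j.
Proof. rewrite mxE !big_ord_recr big_ord0 /= add0r.
congr (_ * _ + _ * _ + _ * _).
all: by f_equal; apply: val_inj. Qed.

Definition pr2 (u v : 'I_3) : 'I_2 -> 'I_3 := fun i => if val i == 0%N then u else v.

Lemma pr2_inj u v : u != v -> injective (pr2 u v).
Proof.
move=> uv [[|[|n]] Hi] [[|[|m]] Hj] //; rewrite /pr2 /= => E; try by apply: val_inj.
- by rewrite E eqxx in uv.
- by rewrite E eqxx in uv.
Qed.

Lemma getN (M : 'M[R]_3) u v u' v' : all_sq_submx_invertible M -> u != v -> u' != v' ->
  exists n11 n12 n21 n22 : R,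
  [/\ n11 * M u u' + n12 * M v u' = 1, n11 * M u v' + n12 * M v v' = 0,
      n21 * M u u' + n22 * M v u' = 0 & n21 * M u v' + n22 * M v v' = 1] /\
  [/\ M u u' * n11 + M u v' * n21 = 1, M u u' * n12 + M u v' * n22 = 0,
      M v u' * n11 + M v v' * n21 = 0 & M v u' * n12 + M v v' * n22 = 1].
Proof.
move=> H uv uv'.
have [N [E1 E2]] := H 2%N _ _ (@pr2_inj u v uv) (@pr2_inj u' v' uv').
have o0 : (0 < 2)%N by []. have o1 : (1 < 2)%N by [].
pose z0 := Ordinal o0. pose z1 := Ordinal o1.
have e1 (i j : 'I_2) := congr1 (fun X : 'M[R]_2 => X i j) E1.
have e2 (i j : 'I_2) := congr1 (fun X : 'M[R]_2 => X i j) E2.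
have s2 (F : 'I_2 -> R) : \sum_(l < 2) F l = F z0 + F z1.
  rewrite !big_ord_recr big_ord0 /= add0r.
  by congr (F _ + F _); apply: val_inj.
exists (N z0 z0), (N z0 z1), (N z1 z0), (N z1 z1).
move: (e2 z0 z0) (e2 z0 z1) (e2 z1 z0) (e2 z1 z1) (e1 z0 z0) (e1 z0 z1) (e1 z1 z0) (e1 z1 z1).
rewrite !mxE !s2 !mxE /pr2 /=.
by move=> -> -> -> -> -> -> -> ->; split.
Qed.

Lemma get1 (M : 'M[R]_3) i j : all_sq_submx_invertible M -> M i j \is a GRing.unit.
Proof.
move=> H.
have inj : injective (fun _ : 'I_1 => i) by move=> x y _; rewrite (ord1 x) (ord1 y).
have inj' : injective (fun _ : 'I_1 => j) by move=> x y _; rewrite (ord1 x) (ord1 y).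
have [N [E1 E2]] := H 1%N _ _ inj inj'.
have e1 := congr1 (fun X : 'M[R]_1 => X ord0 ord0) E1.
have e2 := congr1 (fun X : 'M[R]_1 => X ord0 ord0) E2.
rewrite !mxE !big_ord1 !mxE /= in e1 e2.
by apply: (@two_sided _ (N ord0 ord0) (N ord0 ord0)).
Qed.

Lemma Bunit (A B : 'M[R]_3) (j k u v u' v' : 'I_3) :
  all_sq_submx_invertible A -> A *m B = 1%:M -> B *m A = 1%:M ->
  u != v -> u' != v' -> u != k -> v != k -> u' != j -> v' != j ->
  (forall F : 'I_3 -> R, F i0 + F i1 + F i2 = F k + (F u + F v)) ->
  (forall F : 'I_3 -> R, F i0 + F i1 + F i2 = F j + (F u' + F v')) ->
  B j k \is a GRing.unit.
Proof.
move=> H AB BA uv uv' uk vk uj vj Pk Pj.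
have [n11 [n12 [n21 [n22 [[N1 N2 N3 N4] [N5 N6 N7 N8]]]]]] := @getN A u v u' v' H uv uv'.
have eA (r : 'I_3) := congr1 (fun X : 'M[R]_3 => X r k) AB.
have eB (c : 'I_3) := congr1 (fun X : 'M[R]_3 => X j c) BA.
move: (eA k) (eA u) (eA v) (eB j) (eB u') (eB v').
rewrite !mul3 (Pj (fun l => A k l * B l k)) (Pj (fun l => A u l * B l k)) (Pj (fun l => A v l * B l k)).
rewrite (Pk (fun l => B j l * A l j)) (Pk (fun l => B j l * A l u')) (Pk (fun l => B j l * A l v')).
rewrite !mxE !eqxx (negbTE uk) (negbTE vk) (eq_sym j u') (eq_sym j v') (negbTE uj) (negbTE vj) /=.
move=> e1 e2 e3 f3 f1 f2.
have h1 := @qcol _ _ _ _ _ _ _ _ _ _ _ _ _ _ _ _ N1 N2 N3 N4 e1 e2 e3.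
have h2 := @qrow _ _ _ _ _ _ _ _ _ _ _ _ _ _ _ _ N5 N6 N7 N8 f1 f2 f3.
exact: (@two_sided _ _ _ h1 h2).
Qed.
Lemma ord3_cases (t : 'I_3) : t = i0 \/ t = i1 \/ t = i2.
Proof.
case: t => [[|[|[|n]]] Ht]; [left|right;left|right;right|done]; exact: val_inj.
Qed.

Lemma perm_ex (t : 'I_3) : exists u v : 'I_3, [/\ u != v, u != t, v != t &
  forall F : 'I_3 -> R, F i0 + F i1 + F i2 = F t + (F u + F v)].
Proof.
have [->|[->|->]] := ord3_cases t.
- by exists i1, i2; split => // F; rewrite addrA.
- by exists i0, i2; split => // F; rewrite -addrA addrCA.
- by exists i0, i1; split => // F; rewrite addrC.
Qed.

Lemma schurM (M : 'M[R]_3) u v u' v' : all_sq_submx_invertible M -> u != v -> u' != v' ->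
  (M v v' - M v u' * (M u u')^-1 * M u v') \is a GRing.unit.
Proof.
move=> H uv uv'.
have [n11 [n12 [n21 [n22 [[N1 N2 N3 N4] [N5 N6 N7 N8]]]]]] := @getN M u v u' v' H uv uv'.
exact: (@schur _ _ _ _ _ _ _ _ (@get1 M u u' H) N1 N2 N3 N4 N5 N6 N7 N8).
Qed.

Lemma inv4 p q r s : p \is a GRing.unit -> q \is a GRing.unit -> r \is a GRing.unit ->
  s \is a GRing.unit -> (p * q^-1 * r * s^-1)^-1 = s * r^-1 * q * p^-1.
Proof.
move=> Up Uq Ur Us.
have Uq' : q^-1 \is a GRing.unit by rewrite unitrV.
have Us' : s^-1 \is a GRing.unit by rewrite unitrV.
have U1 : p * q^-1 \is a GRing.unit by rewrite unitrMr.
have U2 : p * q^-1 * r \is a GRing.unit by rewrite unitrMr.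
by rewrite invrM // invrK invrM // invrM // invrK !mulrA.
Qed.
End S.

Theorem lemma10 (R : unitRingType) (a b c d : R) :
  inShat (hatmx a b c d) ->
  let A' := Phi (hatmx a b c d) in
  [/\ A' i1 i1 = (d - 1)^-1 * (d - c) * a^-1 * (d * b^-1 - c * a^-1)^-1 * (d * b^-1 - 1),
      A' i1 i2 = (c - 1)^-1 * (d - c) * b^-1 * (d * b^-1 - c * a^-1)^-1 * (c * a^-1 - 1),
      A' i2 i1 = (b - 1)^-1 * (b - a) * a^-1 * (d * b^-1 - c * a^-1)^-1 * (d * b^-1 - 1)
    & A' i2 i2 = (a - 1)^-1 * (b - a) * b^-1 * (d * b^-1 - c * a^-1)^-1 * (c * a^-1 - 1)].
Proof.
move=> [[Hsub _] _] A'; rewrite /A' /Phi /J2 /LambdaL.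
set M := hatmx a b c d.
have [N HN] : mx_invertible M.
  have := Hsub 3%N id id (@inj_id _) (@inj_id _).
  by rewrite (_ : mxsub id id M = M) //; apply/matrixP => i j; rewrite mxE.
set B := minv M.
have [AB BA] : M *m B = 1%:M /\ B *m M = 1%:M by rewrite /B /minv; apply: (@epsilon_spec _ (inhabits M) (fun B => M *m B = 1%:M /\ B *m M = 1%:M)); exists N.
have BU j k : B j k \is a GRing.unit.
  have [u [v [uv uk vk Pk]]] := perm_ex R k.
  have [u' [v' [uv' uj vj Pj]]] := perm_ex R j.
  exact: (@Bunit R M B j k u v u' v' Hsub AB BA uv uv' uk vk uj vj Pk Pj).
have Ua : a \is a GRing.unit by have := @get1 R M i1 i1 Hsub; rewrite mxE.
have Ub : b \is a GRing.unit by have := @get1 R M i1 i2 Hsub; rewrite mxE.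
have Ud1 : d - 1 \is a GRing.unit.
  by have := @schurM R M i0 i2 i0 i2 Hsub isT isT; rewrite !mxE /= invr1 !mulr1.
have Uc1 : c - 1 \is a GRing.unit.
  by have := @schurM R M i0 i2 i0 i1 Hsub isT isT; rewrite !mxE /= invr1 !mulr1.
have Ub1 : b - 1 \is a GRing.unit.
  by have := @schurM R M i0 i1 i0 i2 Hsub isT isT; rewrite !mxE /= invr1 !mulr1.
have Ua1 : a - 1 \is a GRing.unit.
  by have := @schurM R M i0 i1 i0 i1 Hsub isT isT; rewrite !mxE /= invr1 !mulr1.
have UX : d * b^-1 - c * a^-1 \is a GRing.unit.
  have := @schurM R M i1 i2 i1 i2 Hsub isT isT; rewrite !mxE /=.
  have ->: d * b^-1 - c * a^-1 = (d - c * a^-1 * b) * b^-1 by rewrite mulrBl mulrK.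
  by move=> U; rewrite unitrMl // unitrV.
have eA (i j : 'I_3) := congr1 (fun X : 'M[R]_3 => X i j) AB.
move: (eA i0 i0) (eA i1 i0) (eA i2 i0) (eA i0 i1) (eA i2 i1) (eA i0 i2) (eA i1 i2).
rewrite !mul3 !mxE /= ?mulr0n ?mulr1n !mul1r.
move=> E00 E10 E20 E01 E21 E02 E12.
have ho : ord0 = i0 :> 'I_3 by apply: val_inj.
rewrite ho.
have R11 := @solve2 R _ _ _ _ _ Ud1 E01 E21.
have R12 : B i0 i1 = (c-1)^-1 * (d-c) * B i2 i1.
  apply: (@solve2 R (B i0 i1) (B i2 i1) (B i1 i1) d c Uc1); by rewrite addrAC.
have R21 := @solve2 R _ _ _ _ _ Ub1 E02 E12.
have R22 : B i0 i2 = (a-1)^-1 * (b-a) * B i2 i2.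
  apply: (@solve2 R (B i0 i2) (B i2 i2) (B i1 i2) b a Ua1); by rewrite addrAC.
have C10 := @col0 R _ _ _ _ _ _ _ Ua Ub UX E10 E20.
have UX' : c * a^-1 - d * b^-1 \is a GRing.unit by rewrite -opprB unitrN.
have C20 : B i2 i0 = b^-1 * (c * a^-1 - d * b^-1)^-1 * (1 - c * a^-1) * B i0 i0.
  apply: (@col0 R (B i0 i0) (B i2 i0) (B i1 i0) b a d c Ub Ua UX'); by rewrite addrAC.
split; rewrite inv4 ?BU //.
- rewrite R11 (mulrK (BU i1 i1)) C10 !mulrA (mulrK (BU i0 i0)).
  by rewrite -(opprB d c) -(opprB (d/b) 1) !mulrN !mulNr opprK.
- rewrite R12 (mulrK (BU i2 i1)) C20 !mulrA (mulrK (BU i0 i0)).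
  by rewrite -(opprB (d/b) (c/a)) invrN -(opprB (c/a) 1) !mulrN !mulNr opprK.
- rewrite R21 (mulrK (BU i1 i2)) C10 !mulrA (mulrK (BU i0 i0)).
  by rewrite -(opprB b a) -(opprB (d/b) 1) !mulrN !mulNr opprK.
- rewrite R22 (mulrK (BU i2 i2)) C20 !mulrA (mulrK (BU i0 i0)).
  by rewrite -(opprB (d/b) (c/a)) invrN -(opprB (c/a) 1) !mulrN !mulNr opprK.
Qed.
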